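(* Let $W$ be a channel over the alphabet $\mathcal{X}$. If $W$ admits a decision chain of length $r\ge 3$, then there is no metric on $\mathcal{X}$ matched to $W$.
   Context: A channel $W:\mathcal{X}\to\mathcal{X}$ is given by a conditional probability distribution $\Pr:\mathcal{X}\times\mathcal{X}\to\mathbb{R}$, where $\Pr(x\mid y)=\Pr(x\text{ received}\mid y\text{ sent})\ge 0$ and $\sum_{x}\Pr(x\mid y)=1$ for every $y$. All codewords are assumed equally likely. A channel $W$ and a metric $d$ on $\mathcal{X}$ are matched if for every (nonempty) code $C\subseteq\mathcal{X}$ and every $x\in\mathcal{X}$, $\operatorname{argmax}_{y\in C}\Pr(x\mid y)=\operatorname{argmin}_{y\in C}d(x,y)$ (equality of sets). For $x\in\mathcal{X}$ and $0\le t\le 1$, the $t$-decision region centered at $x$ is $B^t(x)=\{y\in\mathcal{X}:\Pr(x\mid y)\ge t\}$. Elements $x_0,x_1,\dots,x_{r-1}\in\mathcal{X}$ form a decision chain of length $r$ on $W$ if there are real numbers $t_0,\dots,t_{r-1}>0$ such that for every $i$ (indices taken modulo $r$): $x_{i+1}\in B^{t_i}(x_i)$ (forward inclusion) and $x_i\notin B^{t_{i+1}}(x_{i+1})$ (backward exclusion). *)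

(* Defs.v *)
From HB Require Import structures.
From mathcomp Require Import all_boot all_order all_algebra.
From mathcomp Require Import reals.
Set Implicit Arguments. Unset Strict Implicit. Unset Printing Implicit Defensive.
Import Order.TTheory GRing.Theory Num.Theory.
Local Open Scope ring_scope.

(* W x y = Pr(x received | y sent) *)
Definition is_channel (R : realType) (X : finType) (W : X -> X -> R) : Prop :=
  (forall x y, 0 <= W x y) /\ (forall y, \sum_(x : X) W x y = 1).

Definition is_metric (R : realType) (X : finType) (d : X -> X -> R) : Prop :=
  (forall x y, 0 <= d x y) /\
  (forall x y, d x y = 0 <-> x = y) /\
  (forall x y, d x y = d y x) /\
  (forall x y z, d x z <= d x y + d y z).

Definition argmax_in (R : realType) (X : finType) (C : {set X}) (f : X -> R)
  : {set X} := [set y in C | [forall z in C, f z <= f y]].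

Definition argmin_in (R : realType) (X : finType) (C : {set X}) (f : X -> R)
  : {set X} := [set y in C | [forall z in C, f y <= f z]].

Definition matched (R : realType) (X : finType) (W : X -> X -> R)
  (d : X -> X -> R) : Prop :=
  forall (C : {set X}) (x : X), C != set0 ->
    argmax_in C (fun y => W x y) = argmin_in C (fun y => d x y).

Definition decision_region (R : realType) (X : finType) (W : X -> X -> R)
  (t : R) (x : X) : {set X} := [set y | t <= W x y].

(* indices modulo r via ordS *)
Definition decision_chain (R : realType) (X : finType) (W : X -> X -> R)
  (r : nat) (xs : 'I_r -> X) (ts : 'I_r -> R) : Prop :=
  forall i : 'I_r,
    0 < ts i /\
    xs (ordS i) \in decision_region W (ts i) (xs i) /\
    xs i \notin decision_region W (ts (ordS i)) (xs (ordS i)).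

Definition admits_decision_chain (R : realType) (X : finType) (W : X -> X -> R)
  (r : nat) : Prop :=
  exists (xs : 'I_r -> X) (ts : 'I_r -> R), decision_chain W xs ts.

(* Main.v *)
Require Import Defs.
From HB Require Import structures.
From mathcomp Require Import all_boot all_order all_algebra.
From mathcomp Require Import reals.
Import Order.TTheory GRing.Theory Num.Theory.
Local Open Scope ring_scope.

Theorem mainTheorem3 (R : realType) (X : finType) (W : X -> X -> R) (r : nat) :
  is_channel W -> (3 <= r)%N -> admits_decision_chain W r ->
  ~ (exists d : X -> X -> R, is_metric d /\ matched W d).
Proof.
move=> _ hr [xs [ts hc]] [d [[_ [_ [dsym _]]] hm]].
have key : forall x y z, W x y < W x z -> d x z < d x y.
  move=> x y z hW; rewrite ltNge; apply/negP => hd.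
  have hC : [set y; z] != set0.
    by apply/set0Pn; exists y; rewrite !inE eqxx.
  have := hm [set y; z] x hC.
  move/setP/(_ y); rewrite !inE eqxx /=.
  have -> : [forall z0 in [set y; z], d x y <= d x z0].
    apply/forall_inP => w; rewrite !inE => /orP [] /eqP ->; by rewrite ?lexx.
  move/forall_inP/(_ z); rewrite !inE eqxx orbT => /(_ isT).
  by rewrite leNgt hW.
pose D (i : 'I_r) := d (xs i) (xs (ordS i)).
have dec : forall i, D (ordS i) < D i.
  move=> i; rewrite /D.
  have [_ [h1 _]] := hc (ordS i).
  have [_ [_ h2]] := hc i.
  move: h1 h2; rewrite !inE -ltNge => h1 h2.
  rewrite (dsym (xs i)); apply: key.
  exact: lt_le_trans h2 h1.
have i0 : 'I_r by exists 0%N; apply: leq_trans hr.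
case: (@arg_minP _ R 'I_r i0 xpredT D isT) => j _ hj.
have := hj (ordS j) isT.
by rewrite leNgt dec.
Qed.
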